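(* Let $M,N\ge3$ be integers with $M$ divisible by $(7^{N+1})!$. For $1\le k\le N$ let $I_k$ be the sequence consisting of $N-k+1$ batches of $M$ identical items each, where the batches have item sizes $\frac1{7^N},\frac1{7^{N-1}},\dots,\frac1{7^k}$ in this order. Then $\mathrm{OPT}(I_k)\le\frac{7M}{6(7^k+1)}$ for every $1\le k\le N$.
   Context: Ordered Open End Bin Packing: a sequence of items with sizes in $(0,1]$ must be packed into bins in sequence order, where an item may be added to a bin only if the bin's current total size is strictly below $1$; equivalently, in each bin the total size of all items except the one appearing last in the sequence is strictly below $1$. $\mathrm{OPT}(I)$ is the minimum number of bins of such a packing of the sequence $I$. *)

(* Defs.v *)
From mathcomp Require Import all_boot all_order all_algebra.
Set Implicit Arguments. Unset Strict Implicit. Unset Printing Implicit Defensive.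
Import Order.TTheory GRing.Theory Num.Theory.
Local Open Scope ring_scope.

(* An instance is a sequence s of item sizes (rationals in (0,1]).
   A packing into m bins assigns item i (position in the sequence) to bin
   a i : 'I_m.  Items are packed in sequence order: item i may be added to
   bin a i only if the current total size of that bin, i.e. the sum of the
   sizes of the earlier items j < i with a j = a i, is strictly below 1. *)
Definition valid_packing (s : seq rat) (m : nat)
    (a : {ffun 'I_(size s) -> 'I_m}) : bool :=
  [forall i : 'I_(size s),
     \sum_(j < size s | (j < i)%N && (a j == a i)) s`_j < 1].

Definition packable (s : seq rat) (m : nat) : bool :=
  [exists a : {ffun 'I_(size s) -> 'I_m}, valid_packing a].

Lemma packable_size (s : seq rat) : packable s (size s).
Proof.
apply/existsP; exists [ffun i => i]; apply/forallP => i.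
rewrite big1 ?ltr01 // => j /andP [Hj] /eqP; rewrite !ffunE => Hji.
by move: Hj; rewrite Hji ltnn.
Qed.

Lemma ex_packable (s : seq rat) : exists m, packable s m.
Proof. by exists (size s); apply: packable_size. Qed.

Definition OPT (s : seq rat) : nat := ex_minn (@ex_packable s).

Definition batch_seq (M N k : nat) : seq rat :=
  flatten [seq nseq M ((7%:R ^+ e)^-1 : rat) | e <- rev (iota k (N - k + 1))].

(* Main.v *)
Require Import Defs.
From mathcomp Require Import all_boot all_order all_algebra.
From mathcomp Require Import zify ring lra.
Import Order.TTheory GRing.Theory Num.Theory.
Local Open Scope ring_scope.

Lemma big_split_mul (F : nat -> rat) c X :
  \sum_(0 <= p < (c * X)%N) F p = \sum_(0 <= x < c) \sum_(0 <= r < X) F (x * X + r)%N.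
Proof.
elim: c => [|c IH]; first by rewrite mul0n !big_geq.
rewrite big_nat_recr //= mulSnr (@big_cat_nat _ _ _ (c * X)) ?leq_addr //= IH.
congr (_ + _).
have := big_addn 0 (c * X + X) (c * X) xpredT F; rewrite add0n addKn => ->.
by apply: eq_bigr => r _; rewrite addnC.
Qed.

Lemma cnt_eq X t : \sum_(0 <= r < X) ((r == t)%N%:R : rat) = (t < X)%:R.
Proof.
elim: X => [|X IH]; first by rewrite big_geq.
rewrite big_nat_recr //= IH; case: (ltngtP t X) => h.
- by rewrite ltnS ltnW.
- by rewrite ltnS leqNgt h.
- by rewrite h ltnSn.
Qed.

Lemma cnt_mod c X t : (t < X)%N ->
  \sum_(0 <= p < (c * X)%N) ((p %% X == t)%N%:R : rat) = c%:R.
Proof.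
move=> tX; rewrite big_split_mul.
rewrite (eq_big_nat _ _ (F2 := fun _ => 1)); first by rewrite sumr_const_nat subn0.
move=> x _ /=.
rewrite (eq_big_nat _ _ (F2 := fun r => ((r == t)%N%:R : rat))) ?cnt_eq ?tX //.
move=> r /andP [_ rX]; by rewrite modnMDl modn_small.
Qed.

Lemma geo6 (k n : nat) :
  6 * \sum_(0 <= b < n) ((7%:R ^+ (k + (n - b)))^-1 : rat) =
  (7%:R ^+ k)^-1 - (7%:R ^+ (k + n))^-1.
Proof.
elim: n => [|n IH]; first by rewrite big_geq // addn0 subrr mulr0.
rewrite big_nat_recl // subn0 mulrDr.
rewrite (eq_big_nat _ _ (F2 := fun b => ((7%:R ^+ (k + (n - b)))^-1 : rat))); last first.
  by move=> b _; rewrite subSS.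
rewrite IH addnS exprS invrM ?unitfE ?expf_neq0 //.
set y := (7%:R ^+ (k + n))^-1 : rat.
have -> : ((7%:R : rat)^-1 = 1/7) by rewrite div1r.
lra.
Qed.

Lemma size_fl (T : Type) M (f : nat -> T) l :
  size (flatten [seq nseq M (f e) | e <- l]) = (size l * M)%N.
Proof. elim: l => //= e l IH; by rewrite size_cat size_nseq IH mulSn. Qed.

Lemma nth_fl (T : Type) (x0 : T) M (f : nat -> T) l b p : (p < M)%N -> (b < size l)%N ->
  nth x0 (flatten [seq nseq M (f e) | e <- l]) (b * M + p) = f (nth 0%N l b).
Proof.
move=> pM; elim: l b => //= e l IH [|b] /=.
  by rewrite mul0n add0n nth_cat size_nseq pM nth_nseq pM.
rewrite ltnS => bl; rewrite nth_cat size_nseq mulSn -addnA ltnNge leq_addr /=.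
by rewrite addKn IH.
Qed.

Lemma size_bs M N k : size (batch_seq M N k) = ((N - k + 1) * M)%N.
Proof. by rewrite /batch_seq size_fl size_rev size_iota. Qed.

Lemma nth_bs M N k b p : (p < M)%N -> (b <= N - k)%N ->
  (batch_seq M N k)`_(b * M + p) = ((7%:R ^+ (k + (N - k - b)))^-1 : rat).
Proof.
move=> pM bn; rewrite /batch_seq nth_fl // ?size_rev ?size_iota ?addn1 ?ltnS //.
rewrite nth_rev ?size_iota ?addn1 ?ltnS // nth_iota //.
by rewrite subSS; lia.
Qed.

Lemma packable_crit (s : seq rat) m (g : nat -> nat) :
  (forall j, (j < size s)%N -> (g j < m)%N) ->
  (forall j, (j < size s)%N -> 0 <= s`_j) ->
  (forall i, (i < size s)%N -> exists L, [/\ (L < size s)%N, (i <= L)%N, g L = g i &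
     \sum_(0 <= j < size s | (g j == g i) && (j != L)) s`_j < 1]) ->
  packable s m.
Proof.
move=> Hg Hs Hi; apply/existsP.
exists [ffun j : 'I_(size s) => Ordinal (Hg j (ltn_ord j))]; apply/forallP => i.
have [L [Ls iL gL Hsum]] := Hi i (ltn_ord i).
apply: le_lt_trans Hsum.
rewrite big_mkord [X in _ <= X]big_mkcond [X in X <= _]big_mkcond /=.
apply: ler_sum => j _; rewrite !ffunE.
case: ifP => [/andP [ji e]|_].
  have e' : g j == g i by [].
  rewrite e' /= ifT //; apply/eqP => jL; move: ji; rewrite jL ltnNge iL.
  done.
by case: ifP => // _; apply: Hs.
Qed.

Lemma big_shift (F : nat -> rat) a X :
  \sum_(a <= i < a + X) F i = \sum_(0 <= q < X) F (q + a)%N.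
Proof. have := big_addn 0 (a+X) a xpredT F; rewrite add0n addKn => -> //. Qed.

Definition gsmall (c B Q p : nat) : nat :=
  if (p < c * B)%N then (p %% B)%N else ((p - c * B) %% Q)%N.
Definition gbig (c B Q p : nat) : nat :=
  if (p < c * B)%N then (p %% B)%N else (Q + (p - c * B))%N.

Lemma cnt_small c Q t : (0 < Q)%N -> (t < 7 * Q)%N ->
  \sum_(0 <= p < c * (7 * Q) + 6 * Q) ((gsmall c (7 * Q) Q p == t)%N%:R : rat) =
  (if (t < Q)%N then c + 6 else c)%N%:R.
Proof.
move=> Q0 tB.
rewrite (@big_cat_nat _ _ _ (c * (7 * Q))) ?leq_addr //=.
rewrite (eq_big_nat _ _ (F2 := fun p => ((p %% (7 * Q) == t)%N%:R : rat))); last first.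
  by move=> p /andP [_ h]; rewrite /gsmall h.
rewrite cnt_mod // big_shift.
rewrite (eq_big_nat _ _ (F2 := fun q => ((q %% Q == t)%N%:R : rat))); last first.
  by move=> q _; rewrite /gsmall ltnNge leq_addl /= addnK.
case: ifP => tQ.
  by rewrite cnt_mod // natrD.
rewrite big1_seq ?addr0 // => q _.
have : (q %% Q < Q)%N by rewrite ltn_pmod.
by case: eqP => // ->; rewrite tQ.
Qed.

Lemma cnt_big c Q t : (0 < Q)%N -> (t < 7 * Q)%N ->
  \sum_(0 <= p < c * (7 * Q) + 6 * Q) ((gbig c (7 * Q) Q p == t)%N%:R : rat) =
  (if (t < Q)%N then c else c + 1)%N%:R.
Proof.
move=> Q0 tB.
rewrite (@big_cat_nat _ _ _ (c * (7 * Q))) ?leq_addr //=.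
rewrite (eq_big_nat _ _ (F2 := fun p => ((p %% (7 * Q) == t)%N%:R : rat))); last first.
  by move=> p /andP [_ h]; rewrite /gbig h.
rewrite cnt_mod // big_shift.
rewrite (eq_big_nat _ _ (F2 := fun q => ((Q + q == t)%N%:R : rat))); last first.
  by move=> q _; rewrite /gbig ltnNge leq_addl /= addnK.
case: ifP => tQ.
  rewrite big1_seq ?addr0 // => q _.
  by case: eqP => // h; move: tQ; rewrite -h ltnNge leq_addr.
rewrite (eq_big_nat _ _ (F2 := fun q => ((q == t - Q)%N%:R : rat))); last first.
  move=> q _; congr (_%:R); apply/eqP/eqP; lia.
rewrite cnt_eq natrD; congr (_ + _%:R).
apply/eqP; rewrite eqb1; lia.
Qed.

Theorem mainTheorem10 (M N : nat) :
  (3 <= M)%N -> (3 <= N)%N -> ((7 ^ N.+1)`! %| M)%N ->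
  forall k : nat, (1 <= k)%N -> (k <= N)%N ->
    ((OPT (batch_seq M N k))%:R : rat) <=
      (7 * M%:R) / (6 * ((7%:R ^+ k : rat) + 1)).
Proof.
move=> M3 N3 Hdiv [//|k'] _ kN.
set G := (7 ^ k')%N.
have G1 : (1 <= G)%N by rewrite expn_gt0.
have hP : (6 * (7 * G + 1) <= 7 ^ N.+1)%N.
  have : (7 ^ k'.+1 <= 7 ^ N)%N by rewrite leq_pexp2l.
  rewrite expnS [(7 ^ N.+1)%N]expnS -/G; lia.
have [Q HM] : exists Q, M = (Q * (6 * (7 * G + 1)))%N.
  apply/dvdnP; apply: dvdn_trans Hdiv; apply: dvdn_fact; rewrite hP; lia.
have Q0 : (0 < Q)%N by move: M3; rewrite HM; lia.
set B := (7 * Q)%N.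
set c := (6 * G)%N.
have HM' : M = (c * B + 6 * Q)%N by rewrite HM /c /B; lia.
have M0 : (0 < M)%N by lia.
set n := (N - k'.+1)%N.
set g := fun j => if (j %/ M < n)%N then gsmall c B Q (j %% M) else gbig c B Q (j %% M).
have B0 : (0 < B)%N by rewrite /B; lia.
have c1 : (1 <= c)%N by rewrite /c; lia.
have gB : forall j, (g j < B)%N.
  move=> j; have pM : (j %% M < M)%N by rewrite ltn_pmod.
  rewrite /g /gsmall /gbig; case: ifP => _; case: ifP => h.
  - by rewrite ltn_pmod.
  - by apply: (@leq_trans Q); [rewrite ltn_pmod | rewrite /B; lia].
  - by rewrite ltn_pmod.
  - rewrite /B; lia.
have Hpack : packable (batch_seq M N k'.+1) B.
  apply: (@packable_crit _ _ g); rewrite size_bs -/n.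
  - by move=> j _; apply: gB.
  - move=> j hj; rewrite (divn_eq j M) nth_bs ?ltn_pmod //.
      by rewrite invr_ge0 exprn_ge0.

    by move: hj; rewrite -ltn_divLR // -/n; lia.
  move=> i hi.
  set t := g i.
  have tB : (t < B)%N := gB i.
  have [d hd] : exists d, c = d.+1 by exists c.-1; lia.
  have hcB : (c * B = d * B + B)%N by rewrite hd mulSnr.
  set pL := if (t < Q)%N then (d * B + t)%N else (c * B + (t - Q))%N.
  have pLM : (pL < M)%N.
    by rewrite /pL HM'; case: ifP => h; rewrite /B in tB hcB *; lia.
  set L := (n * M + pL)%N.
  have gL : g L = t.
    rewrite /g /L divnMDl // modnMDl (divn_small pLM) (modn_small pLM) addn0 ltnn /gbig /pL.
    case: (ltnP t Q) => h.
      by rewrite ifT ?modnMDl ?modn_small //; lia.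
    rewrite ifF; first lia.
    apply/negbTE; rewrite -leqNgt; lia.
  exists L; split => //.
  - by rewrite /L mulnDl mul1n; lia.
  - have bn : (i %/ M <= n)%N by move: hi; rewrite -ltn_divLR //; lia.
    rewrite /L {1}(divn_eq i M); case: (ltnP (i %/ M) n) => hb.
      have : ((i %/ M).+1 * M <= n * M)%N by rewrite leq_mul2r hb orbT.
      rewrite mulSn; have := ltn_pmod i M0; lia.
    have e : (i %/ M)%N = n by lia.
    rewrite e leq_add2l.
    have gt : gbig c B Q (i %% M)%N = t by rewrite /t /g e ltnn.
    move: gt; rewrite /gbig /pL; set p := (i %% M)%N; case: ifP => hp.
      move=> hpt; case: ifP => htQ.
        rewrite (divn_eq p B) hpt leq_add2r leq_mul2r; apply/orP; right.
        by rewrite -ltnS ltn_divLR // -hd.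
      lia.
    move=> hpt; rewrite ifF; lia.
  set s := batch_seq M N k'.+1.
  set x : rat := (7%:R ^+ k'.+1)^-1.
  have sL : s`_L = x by rewrite /s /L nth_bs // subnn addn0.
  have E : \sum_(0 <= j < (n + 1) * M | g j == t) s`_j =
      s`_L + \sum_(0 <= j < (n + 1) * M | (g j == t) && (j != L)) s`_j.
    rewrite big_mkcond (bigD1_seq L) ?mem_iota ?iota_uniq //=; last by rewrite /L; lia.
    by rewrite gL eqxx big_mkcondl.
  have inner : forall b, (b <= n)%N ->
      \sum_(0 <= p < M) (if g (b * M + p)%N == t then s`_(b * M + p) else 0) =
      (7%:R ^+ (k'.+1 + (n - b)))^-1 *
        \sum_(0 <= p < M) (((if (b < n)%N then gsmall c B Q p else gbig c B Q p) == t)%N%:R : rat).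
    move=> b bn; rewrite mulr_sumr; apply: eq_big_nat => p /andP [_ pM].
    rewrite /s nth_bs // /g divnMDl // modnMDl (divn_small pM) (modn_small pM) addn0.
    by rewrite -/n; case: (_ == t); rewrite ?mulr1n ?mulr0n ?mulr1 ?mulr0.
  have Cs : \sum_(0 <= p < M) ((gsmall c B Q p == t)%N%:R : rat) =
      (if (t < Q)%N then c + 6 else c)%N%:R.
    by rewrite {1}HM' (cnt_small _ _ _ Q0 tB).
  have Cb : \sum_(0 <= p < M) ((gbig c B Q p == t)%N%:R : rat) =
      (if (t < Q)%N then c else c + 1)%N%:R.
    by rewrite {1}HM' (cnt_big _ _ _ Q0 tB).
  set S := \sum_(0 <= b < n) ((7%:R ^+ (k'.+1 + (n - b)))^-1 : rat).
  have T : \sum_(0 <= j < (n + 1) * M | g j == t) s`_j =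
      S * (if (t < Q)%N then c + 6 else c)%N%:R + x * (if (t < Q)%N then c else c + 1)%N%:R.
    rewrite big_mkcond big_split_mul addn1 big_nat_recr //= inner // ltnn subnn addn0 Cb -/x.
    congr (_ + _); rewrite mulr_suml; apply: eq_big_nat => b /andP [_ bn].
    by rewrite inner ?(ltnW bn) // bn Cs.
  move: E; rewrite T sL.
  set R := \sum_(0 <= j < (n + 1) * M | (g j == t) && (j != L)) s`_j => E.
  have hS := geo6 k'.+1 n; rewrite -/S -/x in hS.
  set y := ((7%:R ^+ (k'.+1 + n))^-1 : rat) in hS.
  have y0 : 0 < y by rewrite invr_gt0 exprn_gt0.
  have hGx : (G%:R : rat) * x = 1 / 7.
    by rewrite /x /G exprS natrX; field; rewrite expf_neq0.
  have G0 : (1 : rat) <= G%:R by rewrite ler1n.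
  have Gy : 0 <= (G%:R : rat) * y by rewrite mulr_ge0 // ltW.
  have hS' : S = (x - y) / 6 by lra.
  rewrite hS' in E.
  by case: (ltnP t Q) E => _; rewrite /c ?natrD => E; nra.
rewrite /OPT; case: ex_minnP => m _ /(_ _ Hpack) mB.
apply: (@le_trans _ _ (B%:R)); first by rewrite ler_nat.
have -> : (M%:R : rat) = Q%:R * (6 * (7%:R ^+ k'.+1 + 1)).
  by rewrite HM natrM natrM natrD natrM /G natrX exprS.
have P0 : (0 : rat) < 6 * (7%:R ^+ k'.+1 + 1).
  by rewrite mulr_gt0 // ltr_wpDl // exprn_ge0.
rewrite /B natrM [X in _ <= X](_ : _ = 7 * Q%:R) //.
field; move: P0; rewrite lt_neqAle eq_sym => /andP[+ _].
by rewrite mulf_eq0 negb_or => /andP[].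
Qed.
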